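(* Let $n_1,n_2\ge1$, $n=n_1+n_2-1$, and let $\bm z^\natural\in\mathbb C^n$ be such that $\mathcal G\bm z^\natural$ has rank $r$ and compact SVD $\mathcal G\bm z^\natural=\bm U^\natural\bm\Sigma^\natural\bm V^{\natural*}$ satisfying $\|\bm U^\natural\|_{2,\infty}\le\sqrt{\mu c_s r/n}$ and $\|\bm V^\natural\|_{2,\infty}\le\sqrt{\mu c_s r/n}$, where $c_s=\max\{n/n_1,n/n_2\}$. Let $\Omega\subseteq[n]$ be random, each index included independently with probability $p$. There exists a universal constant $c_0>0$ such that, provided $p\ge(\mu c_s r\log n)/n$, $$\big\|(p^{-1}\mathcal G\Pi_\Omega-\mathcal G)\bm z^\natural\big\|_2\ \le\ c_0\sqrt{\frac{p^{-1}\mu c_s r\log n}{n}}\ \|\mathcal G\bm z^\natural\|_2$$ holds with probability at least $1-2n^{-2}$.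
   Context: $\mathcal H:\mathbb C^n\to\mathbb C^{n_1\times n_2}$ is the Hankel map $[\mathcal H\bm x]_{i,j}=x_{i+j-1}$; $\varsigma_t=\#\{(i,j)\in[n_1]\times[n_2]:i+j-1=t\}$; $\mathcal D\bm x$ has entries $\sqrt{\varsigma_t}x_t$; $\mathcal G=\mathcal H\mathcal D^{-1}$. $\Pi_\Omega$ keeps the entries of a vector indexed by $\Omega$ and zeroes the others. $\|\cdot\|_2$ on matrices is the spectral norm and $\|\cdot\|_{2,\infty}$ is the largest row $\ell_2$-norm. *)

(* Defs.v *)
From HB Require Import structures.
From mathcomp Require Import all_boot all_order all_algebra.
From mathcomp Require Import all_classical all_reals.
From mathcomp Require Import exp.
From mathcomp Require Import complex.
Set Implicit Arguments. Unset Strict Implicit. Unset Printing Implicit Defensive.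
Import Order.TTheory GRing.Theory Num.Theory.
Local Open Scope ring_scope.

Section Defs.
Variable R : realType.
Local Notation C := R[i].

(* x_k (0-indexed) if k < n, and 0 otherwise *)
Definition vget (n : nat) (x : 'cV[C]_n) (k : nat) : C :=
  \sum_(t < n | val t == k) x t ord0.

Definition hankel (n1 n2 n : nat) (x : 'cV[C]_n) : 'M[C]_(n1, n2) :=
  \matrix_(i < n1, j < n2) vget x (i + j).

Definition varsigma (n1 n2 t : nat) : nat :=
  #|[set ij : 'I_n1 * 'I_n2 | (val ij.1 + val ij.2 == t)%N]|.

Definition Dop (n1 n2 n : nat) (x : 'cV[C]_n) : 'cV[C]_n :=
  \col_(t < n) (sqrtC ((varsigma n1 n2 t)%:R : C) * x t ord0).

Definition Dinv (n1 n2 n : nat) (x : 'cV[C]_n) : 'cV[C]_n :=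
  \col_(t < n) (x t ord0 / sqrtC ((varsigma n1 n2 t)%:R : C)).

Definition Gop (n1 n2 n : nat) (x : 'cV[C]_n) : 'M[C]_(n1, n2) :=
  hankel n1 n2 (Dinv n1 n2 x).

Definition PiOmega (n : nat) (S : {set 'I_n}) (x : 'cV[C]_n) : 'cV[C]_n :=
  \col_(t < n) (if t \in S then x t ord0 else 0).

Definition adjmx (m k : nat) (A : 'M[C]_(m, k)) : 'M[C]_(k, m) :=
  (map_mx (@conjc R) A)^T.

Definition vnorm (m : nat) (v : 'cV[C]_m) : R :=
  Num.sqrt (\sum_(i < m) ComplexField.Normc.normc (v i ord0) ^+ 2).

Definition specnorm (m k : nat) (A : 'M[C]_(m, k)) : R :=
  sup [set vnorm (A *m x) | x in [set x : 'cV[C]_k | vnorm x <= 1]].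

Definition norm2inf (m k : nat) (A : 'M[C]_(m, k)) : R :=
  \big[Num.max/0]_(i < m) vnorm (row i A)^T.

(* Bernoulli(p) random subset of [n]: probability of an event E *)
Definition bern_prob (n : nat) (p : R) (E : pred {set 'I_n}) : R :=
  \sum_(S : {set 'I_n} | E S) p ^+ #|S| * (1 - p) ^+ (n - #|S|).

End Defs.

(* Main.v *)
Require Import Defs.
From HB Require Import structures.
From mathcomp Require Import all_boot all_order all_algebra.
From mathcomp Require Import all_classical all_reals.
From mathcomp Require Import exp.
From mathcomp Require Import complex.
From mathcomp Require Import ring lra.
From mathcomp Require Import separable cyclic cyclotomic.
From mathcomp Require Import zify.
Import Order.TTheory GRing.Theory Num.Theory.
Local Open Scope ring_scope.
Local Open Scope complex_scope.
Set Implicit Arguments. Unset Strict Implicit. Unset Printing Implicit Defensive.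
Local Notation expR := sequences.expR.
Section A.
Variable R : realType.
Local Notation C := R[i].
Local Notation normc := ComplexField.Normc.normc.

Lemma normcC (x : C) : `|x| = (normc x)%:C.
Proof. by case: x. Qed.

Lemma normc_ge0 (x : C) : 0 <= normc x.
Proof. by case: x => a b; exact: sqrtr_ge0. Qed.

Lemma cs_real (I : finType) (a b : I -> R) :
  \sum_i a i * b i <= Num.sqrt (\sum_i a i ^+ 2) * Num.sqrt (\sum_i b i ^+ 2).
Proof.
set A := \sum_i a i ^+ 2; set B := \sum_i b i ^+ 2.
have A0 : 0 <= A by apply: sumr_ge0 => i _; exact: sqr_ge0.
have B0 : 0 <= B by apply: sumr_ge0 => i _; exact: sqr_ge0.
have [Ae|Ane] := eqVneq A 0.
  have H := psumr_eq0P (fun i _ => sqr_ge0 (a i)) Ae.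
  rewrite big1 ?mulr_ge0 ?sqrtr_ge0 // => i _.
  by have /eqP := H i isT; rewrite sqrf_eq0 => /eqP ->; rewrite mul0r.
have [Be|Bne] := eqVneq B 0.
  have H := psumr_eq0P (fun i _ => sqr_ge0 (b i)) Be.
  rewrite big1 ?mulr_ge0 ?sqrtr_ge0 // => i _.
  by have /eqP := H i isT; rewrite sqrf_eq0 => /eqP ->; rewrite mulr0.
set sA := Num.sqrt A; set sB := Num.sqrt B.
have sA0 : 0 < sA by rewrite sqrtr_gt0 lt_def Ane A0.
have sB0 : 0 < sB by rewrite sqrtr_gt0 lt_def Bne B0.
have sAA : sA ^+ 2 = A by rewrite sqr_sqrtr.
have sBB : sB ^+ 2 = B by rewrite sqr_sqrtr.
have key : (2 * sA * sB) * (\sum_i a i * b i) <= 2 * (sA * sB) * (sA * sB).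
  have -> : 2 * (sA * sB) * (sA * sB) = \sum_i (a i ^+ 2 * sB ^+ 2 + b i ^+ 2 * sA ^+ 2).
    rewrite big_split /= -!mulr_suml -/A -/B -sAA -sBB; ring.
  rewrite mulr_sumr; apply: ler_sum => i _.
  have := sqr_ge0 (a i * sB - b i * sA); lra.
have p : 0 < 2 * sA * sB by rewrite !mulr_gt0.
rewrite -(ler_pM2l p); apply: le_trans key _; rewrite mulrA; lra.
Qed.

End A.
Section B.
Variable R : realType.
Local Notation C := R[i].
Local Notation normc := ComplexField.Normc.normc.

Definition nsq (m : nat) (v : 'cV[C]_m) : R := \sum_i normc (v i ord0) ^+ 2.

Lemma vnormE m (v : 'cV[C]_m) : vnorm v = Num.sqrt (nsq v).
Proof. by []. Qed.

Lemma nsq_ge0 m (v : 'cV[C]_m) : 0 <= nsq v.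
Proof. by apply: sumr_ge0 => i _; exact: sqr_ge0. Qed.

Lemma vnorm_ge0 m (v : 'cV[C]_m) : 0 <= vnorm v.
Proof. exact: sqrtr_ge0. Qed.

Lemma sqr_vnorm m (v : 'cV[C]_m) : vnorm v ^+ 2 = nsq v.
Proof. by rewrite vnormE sqr_sqrtr // nsq_ge0. Qed.

Lemma normc_sqrC (x : C) : (normc x ^+ 2)%:C = x * conjc x.
Proof. by rewrite rmorphXn /= -normcC sqr_normc. Qed.

Lemma nsqC m (v : 'cV[C]_m) : (nsq v)%:C = \sum_i conjc (v i ord0) * v i ord0.
Proof.
rewrite /nsq rmorph_sum /=; apply: eq_bigr => i _.
by rewrite normc_sqrC mulrC.
Qed.

Lemma nsq_adj m (v : 'cV[C]_m) : (nsq v)%:C = (adjmx v *m v) ord0 ord0.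
Proof.
by rewrite nsqC !mxE; apply: eq_bigr => i _; rewrite !mxE.
Qed.

Lemma adjmxM m k l (A : 'M[C]_(m, k)) (B : 'M[C]_(k, l)) :
  adjmx (A *m B) = adjmx B *m adjmx A.
Proof. by rewrite /adjmx (map_mxM (@conjc R)) trmx_mul. Qed.

Lemma nsq_iso m r (U : 'M[C]_(m, r)) (v : 'cV[C]_r) :
  adjmx U *m U = 1%:M -> nsq (U *m v) = nsq v.
Proof.
move=> hU; apply: complexI; rewrite !nsq_adj adjmxM -mulmxA (mulmxA (adjmx U)) hU.
by rewrite mul1mx.
Qed.

Lemma vnorm_iso m r (U : 'M[C]_(m, r)) (v : 'cV[C]_r) :
  adjmx U *m U = 1%:M -> vnorm (U *m v) = vnorm v.
Proof. by move=> hU; rewrite !vnormE nsq_iso. Qed.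

Lemma normc_sum_le (I : finType) (f : I -> C) :
  normc (\sum_i f i) <= \sum_i normc (f i).
Proof.
rewrite -lecR -normcC rmorph_sum /=.
by apply: le_trans (ler_norm_sum _ _ _) _; apply: ler_sum => i _; rewrite normcC.
Qed.

Lemma cs_cplx (I : finType) (f h : I -> C) :
  normc (\sum_i f i * h i) <=
  Num.sqrt (\sum_i normc (f i) ^+ 2) * Num.sqrt (\sum_i normc (h i) ^+ 2).
Proof.
apply: le_trans (normc_sum_le _) _.
under eq_bigr do rewrite ComplexField.Normc.normcM.
exact: cs_real.
Qed.

Lemma le_vnorm m (v : 'cV[C]_m) (y : R) : 0 <= y -> nsq v <= y ^+ 2 -> vnorm v <= y.
Proof.
move=> y0 h; rewrite vnormE -(ger0_norm y0) -sqrtr_sqr.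
by rewrite ler_sqrt // sqr_ge0.
Qed.

Lemma normc_real (c : R) : normc (c%:C) = `|c|.
Proof. by rewrite /= expr0n /= addr0 sqrtr_sqr. Qed.

Lemma nsq_scale m (c : R) (v : 'cV[C]_m) : nsq (c%:C *: v) = c ^+ 2 * nsq v.
Proof.
rewrite /nsq mulr_sumr; apply: eq_bigr => i _.
by rewrite mxE ComplexField.Normc.normcM normc_real exprMn real_normK // num_real.
Qed.

Lemma vnorm_scale m (c : R) (v : 'cV[C]_m) : 0 <= c -> vnorm (c%:C *: v) = c * vnorm v.
Proof.
move=> c0; rewrite !vnormE nsq_scale sqrtrM ?sqr_ge0 // sqrtr_sqr ger0_norm //.
Qed.

Lemma nsq_eq0 m (v : 'cV[C]_m) : nsq v = 0 -> v = 0.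
Proof.
move=> h; rewrite /nsq in h; apply/matrixP => i j; rewrite (ord1 j) mxE.
have H := psumr_eq0P (fun i _ => sqr_ge0 (normc (v i ord0))) h.
by move: (H i isT) => /eqP; rewrite sqrf_eq0 => /eqP /ComplexField.Normc.eq0_normc.
Qed.

Lemma nsq_mul_le m k (A : 'M[C]_(m, k)) (x : 'cV[C]_k) :
  nsq (A *m x) <= (\sum_i \sum_j normc (A i j) ^+ 2) * nsq x.
Proof.
rewrite /nsq mulr_suml; apply: ler_sum => i _.
rewrite mxE.
have h := cs_cplx (fun j => A i j) (fun j => x j ord0).
have h0 : 0 <= normc (\sum_j A i j * x j ord0) by exact: normc_ge0.
apply: le_trans (_ : (Num.sqrt (\sum_j normc (A i j) ^+ 2) * Num.sqrt (\sum_j normc (x j ord0) ^+ 2)) ^+ 2 <= _).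
  by rewrite ler_pXn2r // ?nnegrE // mulr_ge0 // sqrtr_ge0.
rewrite exprMn !sqr_sqrtr //; by apply: sumr_ge0 => j _; exact: sqr_ge0.
Qed.

End B.
Section Cc.
Variable R : realType.
Local Notation C := R[i].
Local Notation normc := ComplexField.Normc.normc.

Lemma nsq0 m : nsq (0 : 'cV[C]_m) = 0.
Proof. by rewrite /nsq big1 // => i _; rewrite mxE ComplexField.Normc.normc0 expr0n. Qed.

Lemma vnorm0 m : vnorm (0 : 'cV[C]_m) = 0.
Proof. by rewrite vnormE nsq0 sqrtr0. Qed.

Lemma nsq_le1 m (x : 'cV[C]_m) : vnorm x <= 1 -> nsq x <= 1.
Proof.
move=> h; rewrite -sqr_vnorm -(expr1n _ 2).
by rewrite ler_pXn2r // ?nnegrE // vnorm_ge0.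
Qed.

Definition specset m k (A : 'M[C]_(m, k)) : set R :=
  [set vnorm (A *m x) | x in [set x : 'cV[C]_k | vnorm x <= 1]].

Lemma specnormE m k (A : 'M[C]_(m, k)) : specnorm A = sup (specset A).
Proof. by []. Qed.

Lemma specset_ub m k (A : 'M[C]_(m, k)) : has_ubound (specset A).
Proof.
exists (Num.sqrt (\sum_i \sum_j normc (A i j) ^+ 2)) => y [x /= hx <-].
have F0 : 0 <= \sum_i \sum_j normc (A i j) ^+ 2.
  by apply: sumr_ge0 => i _; apply: sumr_ge0 => j _; exact: sqr_ge0.
apply: le_vnorm; first exact: sqrtr_ge0.
rewrite sqr_sqrtr //; apply: le_trans (nsq_mul_le A x) _.
by rewrite ler_piMr // nsq_le1.
Qed.

Lemma specset_in m k (A : 'M[C]_(m, k)) x : vnorm x <= 1 -> specset A (vnorm (A *m x)).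
Proof. by move=> h; exists x. Qed.

Lemma specnorm_ge_in m k (A : 'M[C]_(m, k)) x : vnorm x <= 1 -> vnorm (A *m x) <= specnorm A.
Proof.
by move=> h; rewrite specnormE; apply: ub_le_sup; [exact: specset_ub| exact: specset_in].
Qed.

Lemma specnorm_ge0 m k (A : 'M[C]_(m, k)) : 0 <= specnorm A.
Proof.
have h : vnorm (0 : 'cV[C]_k) <= 1 by rewrite vnorm0 ler01.
by have := specnorm_ge_in A h; rewrite mulmx0 vnorm0.
Qed.

Lemma specnorm_ub m k (A : 'M[C]_(m, k)) x : vnorm (A *m x) <= specnorm A * vnorm x.
Proof.
have [h0|hn0] := eqVneq (nsq x) 0.
  by rewrite (nsq_eq0 h0) mulmx0 !vnorm0 mulr0.
have t0 : 0 < vnorm x.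
  by rewrite vnormE sqrtr_gt0 lt_def hn0 nsq_ge0.
have h : vnorm ((vnorm x)^-1%:C *: x) <= 1.
  by rewrite vnorm_scale ?invr_ge0 ?(ltW t0) // mulVf ?gt_eqF.
have := specnorm_ge_in A h.
rewrite -scalemxAr vnorm_scale ?invr_ge0 ?(ltW t0) //.
by rewrite -(ler_pM2l t0) mulrA mulfV ?gt_eqF // mul1r mulrC.
Qed.

Lemma specnorm_le m k (A : 'M[C]_(m, k)) (B : R) :
  0 <= B -> (forall x, vnorm (A *m x) <= B * vnorm x) -> specnorm A <= B.
Proof.
move=> B0 h; rewrite specnormE; apply: ge_sup.
  by exists (vnorm (A *m 0)); exists 0 => //=; rewrite vnorm0.
move=> y [x /= hx <-]; apply: le_trans (h x) _.
by rewrite ler_piMr.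
Qed.

End Cc.
Section D.
Variable R : realType.
Local Notation C := R[i].
Local Notation normc := ComplexField.Normc.normc.

Lemma normc_conj (x : C) : normc (conjc x) = normc x.
Proof. by case: x => a b /=; rewrite sqrrN. Qed.

Definition rnorm m k (U : 'M[C]_(m, k)) i := vnorm (row i U)^T.

Lemma rnormE m k (U : 'M[C]_(m, k)) i :
  rnorm U i = Num.sqrt (\sum_j normc (U i j) ^+ 2).
Proof. by rewrite /rnorm vnormE /nsq; congr Num.sqrt; apply: eq_bigr => j _; rewrite !mxE. Qed.

Lemma rnorm_le m k (U : 'M[C]_(m, k)) i : rnorm U i <= norm2inf U.
Proof. rewrite /norm2inf /rnorm; exact: le_bigmax. Qed.

Variables (n1 n2 r : nat) (U : 'M[C]_(n1, r)) (sigma : 'rV[C]_r) (V : 'M[C]_(n2, r))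
  (A : 'M[C]_(n1, n2)).
Hypothesis hU : adjmx U *m U = 1%:M.
Hypothesis hV : adjmx V *m V = 1%:M.
Hypothesis hA : A = U *m diag_mx sigma *m adjmx V.

Lemma A_U : A = U *m (adjmx U *m A).
Proof. by rewrite {2}hA -!mulmxA (mulmxA (adjmx U)) hU mul1mx !mulmxA -hA. Qed.

Lemma A_V : A = A *m (V *m adjmx V).
Proof. by rewrite {2}hA -!mulmxA (mulmxA (adjmx V)) hV mul1mx !mulmxA -hA. Qed.

Lemma entry_row_le i (y : 'cV[C]_n2) :
  normc ((A *m y) i ord0) <= rnorm U i * vnorm (A *m y).
Proof.
set w := adjmx U *m A *m y.
have -> : (A *m y) i ord0 = \sum_k U i k * w k ord0.
  have -> : A *m y = U *m w by rewrite /w {1}A_U !mulmxA.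
  by rewrite mxE.
apply: le_trans (cs_cplx _ _) _; rewrite -rnormE.
have e : U *m w = A *m y by rewrite /w !mulmxA -(mulmxA U) -A_U.
have -> : vnorm (A *m y) = vnorm w by rewrite -e vnorm_iso.
by rewrite vnormE.
Qed.

Lemma vnorm_adjcol j :
  vnorm (adjmx V *m delta_mx j ord0) = rnorm V j.
Proof.
rewrite -colE rnormE vnormE /nsq; congr Num.sqrt; apply: eq_bigr => k _.
by rewrite !mxE normc_conj.
Qed.

Lemma Ay_col j : A *m (V *m (adjmx V *m delta_mx j ord0)) = col j A.
Proof. by rewrite colE {2}A_V !mulmxA. Qed.

Lemma entry_le i j : normc (A i j) <= rnorm U i * specnorm A * rnorm V j.
Proof.
have := entry_row_le i (V *m (adjmx V *m delta_mx j ord0)).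
rewrite Ay_col mxE => h; apply: le_trans h _.
rewrite -mulrA ler_wpM2l //; first by rewrite rnormE sqrtr_ge0.
by rewrite -vnorm_adjcol -(vnorm_iso _ hV) -Ay_col specnorm_ub.
Qed.

Lemma col_nsq_le j : \sum_i normc (A i j) ^+ 2 <= (specnorm A * rnorm V j) ^+ 2.
Proof.
have h := specnorm_ub A (V *m (adjmx V *m delta_mx j ord0)).
rewrite Ay_col (vnorm_iso _ hV) vnorm_adjcol in h.
have -> : \sum_i normc (A i j) ^+ 2 = vnorm (col j A) ^+ 2.
  by rewrite sqr_vnorm /nsq; apply: eq_bigr => i _; rewrite mxE.
by rewrite ler_pXn2r // ?nnegrE ?vnorm_ge0 // mulr_ge0 ?specnorm_ge0 // rnormE sqrtr_ge0.
Qed.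

Lemma row_nsq_le i : \sum_j normc (A i j) ^+ 2 <= (rnorm U i * specnorm A) ^+ 2.
Proof.
set s := \sum_j normc (A i j) ^+ 2.
have s0 : 0 <= s by apply: sumr_ge0 => j _; exact: sqr_ge0.
set y := adjmx (row i A).
have hy : vnorm y = Num.sqrt s.
  by rewrite vnormE /nsq; congr Num.sqrt; apply: eq_bigr => j _; rewrite !mxE normc_conj.
have hAy : (A *m y) i ord0 = s%:C.
  rewrite mxE /s rmorph_sum; apply: eq_bigr => j _.
  by rewrite !mxE -normc_sqrC.
have h := entry_row_le i y.
rewrite hAy normc_real ger0_norm // in h.
have h2 := specnorm_ub A y.
rewrite hy in h2.
have c0 : 0 <= rnorm U i by rewrite rnormE sqrtr_ge0.
have h3 : s <= rnorm U i * specnorm A * Num.sqrt s.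
  by apply: le_trans h _; rewrite -mulrA ler_wpM2l.
have [->|sn0] := eqVneq s 0; first by rewrite sqr_ge0.
have ss : 0 < Num.sqrt s by rewrite sqrtr_gt0 lt_def sn0 s0.
rewrite -(sqr_sqrtr s0) ler_pXn2r // ?nnegrE ?(ltW ss) ?mulr_ge0 ?specnorm_ge0 //.
by rewrite -(ler_pM2r ss) -expr2 sqr_sqrtr.
Qed.

End D.
Section E.
Variable R : realType.
Local Notation C := R[i].
Local Notation normc := ComplexField.Normc.normc.

Lemma prim_root_C n : (n > 0)%N -> exists z : C, n.-primitive_root z.
Proof.
pose p : {poly C} := 'X^n - 1; have [r Dp] := closed_field_poly_normal p.
move=> n_gt0; rewrite (monicP _) ?monicXnsubC // scale1r in Dp.
have rn1: all n.-unity_root r by apply/allP=> z; rewrite -root_prod_XsubC -Dp.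
have sz_r: (n < (size r).+1)%N.
  by rewrite -(size_prod_XsubC r id) -Dp size_XnsubC.
have [|z] := hasP (has_prim_root n_gt0 rn1 _ sz_r); last by exists z.
by rewrite -separable_prod_XsubC -Dp separable_Xn_sub_1 // pnatr_eq0 -lt0n.
Qed.

Lemma geo_sum (x : C) n : x ^+ n = 1 ->
  \sum_(k < n) x ^+ k = if x == 1 then n%:R else 0.
Proof.
move=> xn; have [->|x1] := eqVneq x 1.
  by rewrite (eq_bigr (fun _ => 1)) ?sumr_const ?card_ord // => k _; rewrite expr1n.
have := subrX1 x n; rewrite xn subrr => /esym/eqP; rewrite mulf_eq0 subr_eq0 (negbTE x1).
by move/eqP.
Qed.

Variables (n : nat) (z : C).
Hypothesis zp : n.-primitive_root z.
Hypothesis n0 : (0 < n)%N.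

Lemma prim_norm1 k : `|z ^+ k| = 1.
Proof.
have h : `|z| ^+ n = 1 by rewrite -normrX (prim_expr_order zp) normr1.
have /eqP : `|z| == 1 by rewrite -(pexpr_eq1 n0) // h.
by move=> h1; rewrite normrX h1 expr1n.
Qed.

Lemma conj_prim k : conjc (z ^+ k) = (z ^+ k)^-1.
Proof. by rewrite invc_norm prim_norm1 expr1n invr1 mul1r. Qed.

Lemma prim_ratio_eq1 t m : (t < n)%N -> (m < n)%N ->
  (z ^+ t * conjc (z ^+ m) == 1) = (t == m).
Proof.
move=> tn mn; rewrite conj_prim.
have zm0 : z ^+ m != 0 by rewrite -normr_eq0 prim_norm1 oner_eq0.
rewrite -(inj_eq (mulIf zm0)) mulfVK // mul1r.
by rewrite (eq_prim_root_expr zp) !modn_small.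
Qed.

Lemma prim_ratio_n t m : (z ^+ t * conjc (z ^+ m)) ^+ n = 1.
Proof.
rewrite conj_prim exprMn exprVn -!exprM mulnC exprM (prim_expr_order zp) expr1n.
by rewrite mulnC exprM (prim_expr_order zp) expr1n invr1 mulr1.
Qed.

Lemma orth_sum t m : (t < n)%N -> (m < n)%N ->
  \sum_(k < n) z ^+ (k * t) * conjc (z ^+ (k * m)) = if t == m then n%:R else 0.
Proof.
move=> tn mn; rewrite -(prim_ratio_eq1 tn mn) -geo_sum ?prim_ratio_n //.
apply: eq_bigr => k _; rewrite exprMn -exprM [(t * k)%N]mulnC; congr (_ * _).
by rewrite -rmorphXn /= -exprM mulnC.
Qed.

Lemma parseval m (a : 'I_m -> C) : (m <= n)%N ->
  \sum_(k < n) normc (\sum_(i < m) a i * z ^+ (k * i)) ^+ 2 = n%:R * \sum_i normc (a i) ^+ 2.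
Proof.
move=> mn; apply: complexI; rewrite rmorphM rmorph_sum rmorph_sum /= rmorph_nat.
under eq_bigr do rewrite normc_sqrC rmorph_sum /= big_distrl /=.
under eq_bigr do under eq_bigr do rewrite big_distrr /=.
rewrite exchange_big /=.
rewrite mulr_sumr; apply: eq_bigr => i _.
rewrite exchange_big /=.
rewrite (bigD1 i) //= [X in _ + X]big1 ?addr0.
  rewrite normc_sqrC.
  have -> : \sum_(k < n) a i * z ^+ (k * i) * conjc (a i * z ^+ (k * i)) =
     a i * conjc (a i) * \sum_(k < n) z ^+ (k * i) * conjc (z ^+ (k * i)).
    rewrite mulr_sumr; apply: eq_bigr => k _; rewrite rmorphM /=; ring.
  rewrite orth_sum ?eqxx ?(leq_trans (ltn_ord i) mn) //; ring.
move=> j ji.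
have -> : \sum_(k < n) a i * z ^+ (k * i) * conjc (a j * z ^+ (k * j)) =
   a i * conjc (a j) * \sum_(k < n) z ^+ (k * i) * conjc (z ^+ (k * j)).
  rewrite mulr_sumr; apply: eq_bigr => k _; rewrite rmorphM /=; ring.
rewrite orth_sum ?(leq_trans (ltn_ord i) mn) ?(leq_trans (ltn_ord j) mn) //.
by rewrite (negbTE (_ : (i : nat) != j)) ?mulr0 // eq_sym.
Qed.

End E.
Section F.
Variable R : realType.
Local Notation C := R[i].
Local Notation normc := ComplexField.Normc.normc.

Lemma ij_lt n1 n2 (i : 'I_n1) (j : 'I_n2) : (i + j < (n1 + n2).-1)%N.
Proof. have := ltn_ord i; have := ltn_ord j; lia. Qed.

Variables (n1 n2 : nat) (z : C).
Local Notation n := (n1 + n2).-1.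
Hypothesis zp : n.-primitive_root z.
Hypothesis n10 : (0 < n1)%N.
Hypothesis n20 : (0 < n2)%N.

Lemma n0 : (0 < n)%N. Proof. lia. Qed.

Definition dft (w : nat -> C) (k : nat) := \sum_(t < n) w t * z ^+ (k * t).

Lemma dft_inv (w : nat -> C) m : (m < n)%N ->
  \sum_(k < n) dft w k * conjc (z ^+ (k * m)) = n%:R * w m.
Proof.
move=> mn; rewrite /dft.
under eq_bigr do rewrite big_distrl /=.
rewrite exchange_big /=.
under eq_bigr do rewrite -(eq_bigr _ (fun k _ => mulrA _ _ _)) -big_distrr /=.
rewrite (bigD1 (Ordinal mn)) //= [X in _ + X]big1 ?addr0.
  by rewrite (orth_sum zp n0) // eqxx mulrC.
move=> t tm; rewrite (orth_sum zp n0) //.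
by rewrite (negbTE (_ : (t : nat) != m)) ?mulr0.
Qed.

Lemma hankel_bound (w : nat -> C) (B : R) (x : 'cV[C]_n2) :
  0 <= B -> (forall k : 'I_n, normc (dft w k) <= B) ->
  vnorm ((\matrix_(i < n1, j < n2) w (i + j)%N) *m x) <= B * vnorm x.
Proof.
move=> B0 hB.
set M := \matrix_(i < n1, j < n2) w (i + j)%N.
set y := M *m x.
pose P (k : nat) := \sum_(i < n1) conjc (y i ord0) * conjc (z ^+ (k * i)).
pose Q (k : nat) := \sum_(j < n2) x j ord0 * conjc (z ^+ (k * j)).
have key : n%:R * (nsq y)%:C = \sum_(k < n) dft w k * (P k * Q k).
  rewrite nsqC mulr_sumr.
  have -> : \sum_(k < n) dft w k * (P k * Q k) =
     \sum_(k < n) \sum_(i < n1) \sum_(j < n2)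
        dft w k * (conjc (y i ord0) * conjc (z ^+ (k * i))) * (x j ord0 * conjc (z ^+ (k * j))).
    apply: eq_bigr => k _; move: (dft w k) => d; rewrite /P /Q big_distrl big_distrr /=.
    apply: eq_bigr => i _; rewrite mulrA big_distrr /=; apply: eq_bigr => j _; ring.
  rewrite exchange_big /=; apply: eq_bigr => i _.
  rewrite exchange_big /=.
  have yi : y i ord0 = \sum_(j < n2) w (i + j)%N * x j ord0.
    by rewrite /y !mxE; apply: eq_bigr => j _; rewrite mxE.
  rewrite {2}yi !big_distrr /=; apply: eq_bigr => j _.
  transitivity (conjc (y i ord0) * (n%:R * w (i + j)%N) * x j ord0); first by ring.
  rewrite -(dft_inv _ (ij_lt i j)) big_distrr big_distrl /=; apply: eq_bigr => k _.
  rewrite mulnDr exprD rmorphM /=; ring.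
have nP : \sum_(k < n) normc (P k) ^+ 2 = n%:R * nsq y.
  rewrite -(parseval zp n0 (fun i => y i ord0)) ?leq_addr //; last first.
    by have := n20; case: n2 => // m _; rewrite addnS /= leq_addr.
  apply: eq_bigr => k _; congr (_ ^+ 2).
  rewrite /P -normc_conj rmorph_sum /=; congr normc; apply: eq_bigr => i _.
  by rewrite rmorphM /= !conjcK.
have nQ : \sum_(k < n) normc (Q k) ^+ 2 = n%:R * nsq x.
  have -> : nsq x = \sum_(j < n2) normc (conjc (x j ord0)) ^+ 2.
    by apply: eq_bigr => j _; rewrite normc_conj.
  rewrite -(parseval zp n0 (fun j => conjc (x j ord0))); last first.
    by have := n10; case: n1 => // m _; rewrite addSn /= leq_addl.
  apply: eq_bigr => k _; congr (_ ^+ 2).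
  rewrite /Q -normc_conj rmorph_sum /=; congr normc; apply: eq_bigr => j _.
  by rewrite rmorphM /= !conjcK.
have nn : (0 : R) < n%:R by rewrite ltr0n n0.
have h1 : n%:R * nsq y <= B * (n%:R * (vnorm y * vnorm x)).
  have -> : n%:R * nsq y = normc (n%:R * (nsq y)%:C).
    by rewrite -(rmorph_nat (real_complex R) n) -rmorphM normc_real ger0_norm // mulr_ge0 ?ler0n ?nsq_ge0.
  rewrite key; apply: le_trans (normc_sum_le _) _.
  apply: le_trans (_ : \sum_(k < n) B * (normc (P k) * normc (Q k)) <= _).
    apply: ler_sum => k _; rewrite !ComplexField.Normc.normcM.
    by apply: ler_wpM2r (hB k); rewrite mulr_ge0 ?normc_ge0.
  rewrite -mulr_sumr ler_wpM2l //; apply: le_trans (cs_real _ _) _.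
  rewrite nP nQ !sqrtrM ?ler0n // !vnormE.
  rewrite mulrACA -expr2 sqr_sqrtr ?ler0n //.
have h2 : vnorm y ^+ 2 <= B * vnorm x * vnorm y.
  rewrite sqr_vnorm -(ler_pM2l nn) (le_trans h1) //.
  by have -> : B * (n%:R * (vnorm y * vnorm x)) = n%:R * (B * vnorm x * vnorm y) by ring.
have [y0|yn0] := eqVneq (vnorm y) 0.
  by rewrite y0; apply: mulr_ge0 => //; exact: vnorm_ge0.
have yp : 0 < vnorm y by rewrite lt_def yn0 vnorm_ge0.
by rewrite -(ler_pM2r yp) -expr2.
Qed.

End F.
Section G.
Variable R : realType.

Lemma expR_le_quad (x : R) : x <= 1 -> expR x <= 1 + x + 2 * x ^+ 2.
Proof.
move=> x1.
have h1 : 1 - x / 2 <= expR (- x / 2).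
  by have := expR_ge1Dx (- x / 2); rewrite mulNr.
have h0 : 0 <= 1 - x / 2 by lra.
have h2 : (1 - x / 2) ^+ 2 <= expR (- x).
  have -> : - x = - x / 2 + - x / 2 by field.
  by rewrite expRD -expr2 ler_pXn2r // nnegrE // expR_ge0.
have e0 := expR_gt0 x.
have h3 : expR x * (1 - x / 2) ^+ 2 <= 1.
  by rewrite -[X in _ <= X](expRxMexpNx_1 x); apply: ler_wpM2l => //; exact: ltW.
have h4 : 1 <= (1 - x / 2) ^+ 2 * (1 + x + 2 * x ^+ 2).
  have : 0 <= x ^+ 2 * ((1 - x) * (5 - 2 * x)) by apply: mulr_ge0; [exact: sqr_ge0| apply: mulr_ge0; lra].
  move=> h; have -> : (1 - x / 2) ^+ 2 * (1 + x + 2 * x ^+ 2) = 1 + x ^+ 2 * ((1 - x) * (5 - 2 * x)) / 4 by field.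
  lra.
have q0 : 0 <= 1 + x + 2 * x ^+ 2.
  have := sqr_ge0 (x + 1 / 4); lra.
apply: le_trans (_ : expR x * ((1 - x / 2) ^+ 2 * (1 + x + 2 * x ^+ 2)) <= _).
  by rewrite -{1}(mulr1 (expR x)); apply: ler_wpM2l => //; exact: ltW.
by rewrite mulrA -{2}(mul1r (1 + x + _)) ler_wpM2r.
Qed.


Definition wt n (p : R) (S : {set 'I_n}) : R := p ^+ #|S| * (1 - p) ^+ (n - #|S|).

Lemma bern_probE n (p : R) (E : pred {set 'I_n}) : bern_prob p E = \sum_(S | E S) wt p S.
Proof. by []. Qed.

Lemma wtE n p (S : {set 'I_n}) : wt p S = \prod_t (if t \in S then p else 1 - p).
Proof.
rewrite (bigID (mem S)) /=.
rewrite [X in X * _](eq_bigr (fun _ => p)); last by move=> t ->.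
rewrite [X in _ * X](eq_bigr (fun _ => 1 - p)); last by move=> t tS; rewrite (negbTE tS).
rewrite !prodr_const /wt; congr (_ * _ ^+ _).
have e := cardC (mem S); rewrite card_ord in e.
have -> : (n - #|S|)%N = #|[predC S]|.
  apply/eqP; rewrite -(eqn_add2l #|S|) subnKC ?e //.
  by apply: leq_trans (max_card _) _; rewrite card_ord.
by apply: eq_card => t; rewrite !inE.
Qed.

Lemma prod_sum n (f : 'I_n -> bool -> R) :
  \sum_(S : {set 'I_n}) \prod_t f t (t \in S) = \prod_t (f t true + f t false).
Proof.
rewrite (eq_bigr (fun t => \sum_(c : bool) f t c)); last by move=> t _; rewrite big_bool.
rewrite bigA_distr_bigA /=.
pose h (S : {set 'I_n}) : {ffun 'I_n -> bool} := [ffun t => t \in S].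
have hb : bijective h.
  exists (fun g : {ffun 'I_n -> bool} => [set t | g t]).
    by move=> S; apply/setP => t; rewrite inE ffunE.
  by move=> g; apply/ffunP => t; rewrite ffunE inE.
rewrite (reindex h (onW_bij _ hb)) /=; apply: eq_bigr => S _.
by apply: eq_bigr => t _; rewrite ffunE.
Qed.

Lemma wt_ge0 n p (S : {set 'I_n}) : 0 <= p <= 1 -> 0 <= wt p S.
Proof. by case/andP => p0 p1; rewrite /wt mulr_ge0 // exprn_ge0 // subr_ge0. Qed.

Lemma wt_total n (p : R) : \sum_(S : {set 'I_n}) wt p S = 1.
Proof.
under eq_bigr do rewrite wtE.
rewrite (prod_sum (fun _ c => if c then p else 1 - p)) /=.
by rewrite big1 // => t _; rewrite addrC subrK.
Qed.

Lemma union_bound n (p : R) (J : finType) (E : pred {set 'I_n}) (bad : J -> pred {set 'I_n}) :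
  0 <= p <= 1 -> (forall S, ~~ E S -> exists j, bad j S) ->
  1 - \sum_j bern_prob p (bad j) <= bern_prob p E.
Proof.
move=> p01 hE.
rewrite -(wt_total n p) (bigID E) /= -bern_probE -addrA -[X in _ <= X]addr0 lerD2l subr_le0.
rewrite (eq_bigr (fun j => \sum_S ((bad j S)%:R * wt p S))); last first.
  by move=> j _; rewrite bern_probE big_mkcond /=; apply: eq_bigr => S _; case: (bad j S); rewrite ?mul1r ?mul0r.
rewrite exchange_big /= big_mkcond /=; apply: ler_sum => S _.
case: ifP => [hS|_]; last by apply: sumr_ge0 => j _; rewrite mulr_ge0 ?ler0n ?wt_ge0.
have [j hj] := hE S hS.
rewrite (bigD1 j) //= hj mul1r lerDl.
by apply: sumr_ge0 => i _; rewrite mulr_ge0 ?ler0n ?wt_ge0.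
Qed.

End G.
Section G2.
Variable R : realType.

Lemma mgf_factor (p lam b : R) : 0 < p <= 1 -> 0 <= lam -> lam * `|b| / p <= 1 ->
  p * expR (lam * ((p^-1 - 1) * b)) + (1 - p) * expR (lam * (- b))
   <= expR (2 * lam ^+ 2 / p * b ^+ 2).
Proof.
case/andP => p0 p1 l0 hb.
set ip := p^-1.
have pip : p * ip = 1 by rewrite /ip mulfV ?gt_eqF.
have ip1 : 1 <= ip by rewrite /ip invr_ge1 ?unitfE ?gt_eqF.
set u := lam * b.
have hu : `|u| * ip <= 1 by rewrite /u normrM (ger0_norm l0).
have x1 : u * (ip - 1) <= 1.
  apply: le_trans (_ : `|u| * (ip - 1) <= _); first by rewrite ler_wpM2r ?subr_ge0 // ler_norm.
  apply: le_trans hu; apply: ler_wpM2l; [exact: normr_ge0| lra].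
have x0 : - u <= 1.
  apply: le_trans (_ : `|u| <= _); first by rewrite -normrN ler_norm.
  apply: le_trans hu; rewrite ler_peMr //; exact: normr_ge0.
have e1 : lam * ((ip - 1) * b) = u * (ip - 1) by rewrite /u; ring.
have e0 : lam * (- b) = - u by rewrite /u; ring.
rewrite e1 e0.
apply: le_trans (_ : p * (1 + u * (ip - 1) + 2 * (u * (ip - 1)) ^+ 2) +
                     (1 - p) * (1 + - u + 2 * (- u) ^+ 2) <= _).
  apply: lerD; apply: ler_wpM2l; rewrite ?subr_ge0 ?(ltW p0) //; exact: expR_le_quad.
have -> : p * (1 + u * (ip - 1) + 2 * (u * (ip - 1)) ^+ 2) + (1 - p) * (1 + - u + 2 * (- u) ^+ 2)
   = 1 + 2 * u ^+ 2 * (ip - 1).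
  have -> : p * (1 + u * (ip - 1) + 2 * (u * (ip - 1)) ^+ 2) =
       p + (p * ip) * u - p * u + 2 * u ^+ 2 * ((p * ip) * ip - 2 * (p * ip) + p) by ring.
  rewrite pip; ring.
have -> : 2 * lam ^+ 2 / p * b ^+ 2 = 2 * u ^+ 2 * ip by rewrite /u /ip; ring.
apply: le_trans (expR_ge1Dx _); rewrite lerD2l; apply: ler_wpM2l; [by rewrite mulr_ge0 ?sqr_ge0 | lra].
Qed.

Lemma chernoff n (p lam s : R) (b : 'I_n -> R) :
  0 < p <= 1 -> 0 <= lam -> (forall t, lam * `|b t| / p <= 1) ->
  bern_prob p (fun S : {set 'I_n} =>
     s < \sum_t ((if t \in S then p^-1 else 0) - 1) * b t)
  <= expR (2 * lam ^+ 2 / p * \sum_t b t ^+ 2 - lam * s).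
Proof.
move=> p01 l0 hb.
have p01' : 0 <= p <= 1 by case/andP: p01 => p0 p1; rewrite ltW.
set X := fun S : {set 'I_n} => \sum_t ((if t \in S then p^-1 else 0) - 1) * b t.
apply: le_trans (_ : \sum_(S : {set 'I_n}) wt p S * expR (lam * (X S - s)) <= _).
  rewrite bern_probE big_mkcond /=; apply: ler_sum => S _.
  case: ifP => hS; last by rewrite mulr_ge0 ?wt_ge0 ?expR_ge0.
  rewrite -{1}(mulr1 (wt p S)) ler_wpM2l ?wt_ge0 //.
  apply: le_trans (expR_ge1Dx _); rewrite lerDl mulr_ge0 // subr_ge0 ltW //.
pose f := fun (t : 'I_n) (c : bool) => (if c then p else 1 - p) *
             expR (lam * (((if c then p^-1 else 0) - 1) * b t)).
have -> : \sum_(S : {set 'I_n}) wt p S * expR (lam * (X S - s)) =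
    expR (- (lam * s)) * \prod_t (f t true + f t false).
  rewrite -prod_sum mulr_sumr; apply: eq_bigr => S _.
  rewrite wtE mulrDr expRD mulrN /X mulr_sumr expR_sum.
  transitivity (expR (- (lam * s)) * (\prod_t (if t \in S then p else 1 - p) *
     \prod_t expR (lam * (((if t \in S then p^-1 else 0) - 1) * b t)))); first by ring.
  congr (_ * _); rewrite -big_split; apply: eq_bigr => t _.
  by rewrite /f; case: (t \in S).
rewrite mulrC expRD mulrC -mulNr mulrC ler_wpM2r ?expR_ge0 //.
rewrite mulr_sumr expR_sum; apply: ler_prod => t _.
rewrite /f /= sub0r mulN1r.
rewrite addr_ge0 ?mulr_ge0 ?expR_ge0 ?subr_ge0 //=; last by case/andP: p01.
  exact: mgf_factor.
by case/andP: p01 => p0 _; rewrite ltW.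
Qed.

End G2.
Section M1.
Variable R : realType.
Local Notation C := R[i].
Local Notation normc := ComplexField.Normc.normc.

Lemma ReD (x y : C) : complex.Re (x + y) = complex.Re x + complex.Re y.
Proof. by case: x; case: y. Qed.

Lemma ImD (x y : C) : complex.Im (x + y) = complex.Im x + complex.Im y.
Proof. by case: x; case: y. Qed.

Lemma Re_sum (I : finType) (F : I -> C) : complex.Re (\sum_i F i) = \sum_i complex.Re (F i).
Proof.
apply: (big_rec2 (fun (y : R) (x : C) => complex.Re x = y)) => // i y x _ <-.
exact: ReD.
Qed.

Lemma Im_sum (I : finType) (F : I -> C) : complex.Im (\sum_i F i) = \sum_i complex.Im (F i).
Proof.
apply: (big_rec2 (fun (y : R) (x : C) => complex.Im x = y)) => // i y x _ <-.
exact: ImD.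
Qed.

Lemma Re_scale (r : R) (c : C) : complex.Re (r%:C * c) = r * complex.Re c.
Proof. by case: c => a b; rewrite [LHS]/= mul0r subr0. Qed.

Lemma Im_scale (r : R) (c : C) : complex.Im (r%:C * c) = r * complex.Im c.
Proof. by case: c => a b; rewrite [LHS]/= mul0r addr0. Qed.

Lemma normcRI (c : C) : normc c = Num.sqrt (complex.Re c ^+ 2 + complex.Im c ^+ 2).
Proof. by case: c. Qed.

Lemma Re_le_normc (c : C) : `|complex.Re c| <= normc c.
Proof.
rewrite normcRI -sqrtr_sqr ler_sqrt ?addr_ge0 ?sqr_ge0 //.
by rewrite lerDl sqr_ge0.
Qed.

Lemma Im_le_normc (c : C) : `|complex.Im c| <= normc c.
Proof.
rewrite normcRI -sqrtr_sqr ler_sqrt ?addr_ge0 ?sqr_ge0 //.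
by rewrite lerDr sqr_ge0.
Qed.

Lemma normc_le_ReIm (c : C) : normc c <= `|complex.Re c| + `|complex.Im c|.
Proof.
rewrite normcRI.
set a := complex.Re c; set b := complex.Im c.
have h0 : 0 <= `|a| + `|b| by rewrite addr_ge0.
rewrite -(ger0_norm h0) -sqrtr_sqr ler_sqrt ?sqr_ge0 //.
have -> : a ^+ 2 + b ^+ 2 = `|a| ^+ 2 + `|b| ^+ 2 by rewrite !real_normK ?num_real.
have := normr_ge0 a; have := normr_ge0 b; nra.
Qed.

Lemma vget_ord n (x : 'cV[C]_n) (t : 'I_n) : vget x t = x t ord0.
Proof. by rewrite /vget (eq_bigl (fun u => u == t)) ?big_pred1_eq. Qed.

Lemma cover n1 n2 t : (0 < n1)%N -> (0 < n2)%N -> (t < (n1 + n2).-1)%N ->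
  exists (i : 'I_n1) (j : 'I_n2), (i + j)%N = t.
Proof.
move=> h1 h2 ht.
have hi : (minn t n1.-1 < n1)%N by rewrite gtn_min; apply/orP; right; lia.
have hj : (t - minn t n1.-1 < n2)%N by lia.
by exists (Ordinal hi), (Ordinal hj) => /=; lia.
Qed.

Lemma sum_split_bound n1 n2 (F : nat -> R) : (forall t, 0 <= F t) -> (0 < n1)%N -> (0 < n2)%N ->
  \sum_(t < (n1 + n2).-1) F t <= \sum_(j < n2) F j + \sum_(i < n1) F (i + n2.-1)%N.
Proof.
move=> F0 h1 h2.
have e2 : \sum_(n2.-1 <= t < (n1 + n2).-1) F t = \sum_(i < n1) F (i + n2.-1)%N.
  rewrite -{1}[n2.-1]add0n big_addn.
  have -> : ((n1 + n2).-1 - n2.-1)%N = n1 by lia.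
  by rewrite big_mkord.
rewrite -(big_mkord xpredT F) (big_cat_nat _ (n := n2)) //=; last by lia.
rewrite big_mkord lerD2l -e2 (@big_ltn R 0 +%R n2.-1); last by lia.
have -> : n2.-1.+1 = n2 by lia.
by rewrite lerDr.
Qed.

End M1.
Section M2.
Variable R : realType.
Local Notation C := R[i].
Local Notation normc := ComplexField.Normc.normc.

Variables (n1 n2 r : nat) (p : R) (z : 'cV[C]_((n1 + n2).-1))
  (U : 'M[C]_(n1, r)) (sigma : 'rV[C]_r) (V : 'M[C]_(n2, r)) (a : R).
Local Notation n := (n1 + n2).-1.
Hypotheses (h1 : (0 < n1)%N) (h2 : (0 < n2)%N).
Hypothesis hU : adjmx U *m U = 1%:M.
Hypothesis hV : adjmx V *m V = 1%:M.
Hypothesis hA : Gop n1 n2 z = U *m diag_mx sigma *m adjmx V.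
Hypothesis hUi : norm2inf U <= Num.sqrt a.
Hypothesis hVi : norm2inf V <= Num.sqrt a.

Local Notation A := (Gop n1 n2 z).
Local Notation K := (specnorm (Gop n1 n2 z)).

Definition gg (k : nat) : C := vget (Dinv n1 n2 z) k.

Lemma A_entry i j : A i j = gg (i + j).
Proof. by rewrite /Gop /hankel mxE. Qed.

Lemma rnorm_ge0 m k (M : 'M[C]_(m, k)) i : 0 <= rnorm M i.
Proof. by rewrite rnormE sqrtr_ge0. Qed.

Lemma K_ge0 : 0 <= K. Proof. exact: specnorm_ge0. Qed.

Lemma gg_bound t : (t < n)%N -> normc (gg t) <= Num.sqrt a ^+ 2 * K.
Proof.
move=> ht; have [i [j <-]] := cover h1 h2 ht.
rewrite -A_entry; apply: le_trans (entry_le hU hV hA i j) _.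
have -> : Num.sqrt a ^+ 2 * K = Num.sqrt a * K * Num.sqrt a by ring.
have hu := le_trans (rnorm_le U i) hUi.
have hv := le_trans (rnorm_le V j) hVi.
apply: ler_pM; rewrite ?mulr_ge0 ?rnorm_ge0 ?K_ge0 //.
by apply: ler_pM; rewrite ?rnorm_ge0 ?K_ge0.
Qed.

Lemma gg_sum : \sum_(t < n) normc (gg t) ^+ 2 <= 2 * (Num.sqrt a ^+ 2 * K ^+ 2).
Proof.
apply: le_trans (sum_split_bound (F := fun t => normc (gg t) ^+ 2) _ h1 h2) _.
  by move=> t; exact: sqr_ge0.
rewrite mulr2n mulrDl mul1r; apply: lerD.
  pose i0 : 'I_n1 := Ordinal h1.
  have -> : \sum_(j < n2) normc (gg j) ^+ 2 = \sum_j normc (A i0 j) ^+ 2.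
    by apply: eq_bigr => j _; rewrite A_entry.
  apply: le_trans (row_nsq_le hU hA i0) _.
  rewrite -exprMn ler_pXn2r ?nnegrE ?mulr_ge0 ?rnorm_ge0 ?K_ge0 ?sqrtr_ge0 //.
  by rewrite ler_wpM2r ?K_ge0 // (le_trans (rnorm_le U i0) hUi).
have hj : (n2.-1 < n2)%N by rewrite prednK.
pose j0 : 'I_n2 := Ordinal hj.
have -> : \sum_(i < n1) normc (gg (i + n2.-1)) ^+ 2 = \sum_i normc (A i j0) ^+ 2.
  by apply: eq_bigr => i _; rewrite A_entry.
apply: le_trans (col_nsq_le hV hA j0) _.
rewrite -exprMn [_ * K]mulrC ler_pXn2r ?nnegrE ?mulr_ge0 ?rnorm_ge0 ?K_ge0 ?sqrtr_ge0 //.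
by rewrite ler_wpM2l ?K_ge0 // (le_trans (rnorm_le V j0) hVi).
Qed.


Definition eps (S : {set 'I_n}) (t : 'I_n) : R := (if t \in S then p^-1 else 0) - 1.

Definition ww (S : {set 'I_n}) (k : nat) : C :=
  (p^-1)%:C * vget (Dinv n1 n2 (PiOmega S z)) k - gg k.

Lemma MS_eq S : (p^-1)%:C *: Gop n1 n2 (PiOmega S z) - A = \matrix_(i < n1, j < n2) ww S (i + j).
Proof. by apply/matrixP => i j; rewrite !mxE. Qed.

Lemma ww_ord S (t : 'I_n) : ww S t = (eps S t)%:C * gg t.
Proof.
rewrite /ww /gg /eps !vget_ord !mxE.
case: (t \in S).
  by rewrite (rmorphB (real_complex R)) (rmorph1 (real_complex R)); ring.
by rewrite mul0r mulr0 (rmorphB (real_complex R)) (rmorph0 (real_complex R)) (rmorph1 (real_complex R)); ring.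
Qed.

Variable om : C.

Lemma dft_ww S k : dft n1 n2 om (ww S) k = \sum_(t < n) (eps S t)%:C * (gg t * om ^+ (k * t)).
Proof. by rewrite /dft; apply: eq_bigr => t _; rewrite ww_ord mulrA. Qed.

Definition cc (k : nat) (t : 'I_n) : C := gg t * om ^+ (k * t).

Definition bvec (j : 'I_n * 'I_4) (t : 'I_n) : R :=
  let c := cc j.1 t in
  if val j.2 == 0%N then complex.Re c else if val j.2 == 1%N then - complex.Re c
  else if val j.2 == 2%N then complex.Im c else - complex.Im c.

Definition XX (S : {set 'I_n}) (j : 'I_n * 'I_4) : R := \sum_t eps S t * bvec j t.

Lemma good_dft S (k : 'I_n) (s : R) : (forall m : 'I_4, XX S (k, m) <= s) ->
  normc (dft n1 n2 om (ww S) k) <= s + s.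
Proof.
move=> hm.
have hRe : complex.Re (dft n1 n2 om (ww S) k) = XX S (k, @Ordinal 4 0 isT).
  by rewrite dft_ww Re_sum /XX; apply: eq_bigr => t _; rewrite Re_scale.
have hReN : - complex.Re (dft n1 n2 om (ww S) k) = XX S (k, @Ordinal 4 1 isT).
  rewrite dft_ww Re_sum /XX -sumrN; apply: eq_bigr => t _.
  by rewrite Re_scale /bvec /= mulrN.
have hIm : complex.Im (dft n1 n2 om (ww S) k) = XX S (k, @Ordinal 4 2 isT).
  by rewrite dft_ww Im_sum /XX; apply: eq_bigr => t _; rewrite Im_scale.
have hImN : - complex.Im (dft n1 n2 om (ww S) k) = XX S (k, @Ordinal 4 3 isT).
  rewrite dft_ww Im_sum /XX -sumrN; apply: eq_bigr => t _.
  by rewrite Im_scale /bvec /= mulrN.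
apply: le_trans (normc_le_ReIm _) _; apply: lerD; rewrite ler_norml.
  by rewrite lerNl hReN hRe !hm.
by rewrite lerNl hImN hIm !hm.
Qed.

Hypothesis omp : n.-primitive_root om.
Hypothesis n0 : (0 < n)%N.

Lemma bvec_le j t : `|bvec j t| <= normc (gg t).
Proof.
have hc : normc (cc j.1 t) = normc (gg t).
  rewrite /cc ComplexField.Normc.normcM.
  have : `|om ^+ (j.1 * t)| = 1 := prim_norm1 omp n0 _.
  by rewrite normcC => /complexI ->; rewrite mulr1.
rewrite -hc /bvec.
case: ifP => _; first exact: Re_le_normc.
case: ifP => _; first by rewrite normrN; exact: Re_le_normc.
case: ifP => _; first exact: Im_le_normc.
by rewrite normrN; exact: Im_le_normc.
Qed.

Lemma bvec_sum j : \sum_t bvec j t ^+ 2 <= \sum_(t < n) normc (gg t) ^+ 2.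
Proof.
apply: ler_sum => t _; rewrite -real_normK ?num_real //.
by rewrite ler_pXn2r ?nnegrE ?normr_ge0 ?normc_ge0 // bvec_le.
Qed.


Lemma core : (1 < n)%N -> 0 < p <= 1 -> 0 < K -> 0 < a -> a * ln (n%:R : R) / p <= 1 ->
  1 - 2 / n%:R ^+ 2 <= bern_prob p (fun S : {set 'I_n} =>
     specnorm ((p^-1)%:C *: Gop n1 n2 (PiOmega S z) - A) <= 16 * Num.sqrt (a * ln (n%:R : R) / p) * K).
Proof.
move=> n1lt p01 K0 a0 q1.
have p0 : 0 < p by case/andP: p01.
have p01' : 0 <= p <= 1 by case/andP: p01 => b1 b2; rewrite b2 ltW.
have nR : (1 : R) < n%:R by rewrite ltr1n.
set L := ln (n%:R : R).
have L0 : 0 < L by apply: ln_gt0.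
set q := a * L / p.
have q0 : 0 < q by rewrite /q divr_gt0 // mulr_gt0.
set sg := Num.sqrt q.
have sg0 : 0 < sg by rewrite sqrtr_gt0.
have sg2 : sg ^+ 2 = q by rewrite sqr_sqrtr // ltW.
have sg1 : sg <= 1 by rewrite -sqrtr1 ler_sqrt.
have sa : Num.sqrt a ^+ 2 = a by rewrite sqr_sqrtr // ltW.
set s := 8 * sg * K.
set lam := L / (sg * K).
have sK0 : 0 < sg * K by rewrite mulr_gt0.
have lam0 : 0 <= lam by rewrite ltW // divr_gt0.
set E := (fun S : {set 'I_n} =>
     specnorm ((p^-1)%:C *: Gop n1 n2 (PiOmega S z) - A) <= 16 * sg * K).
pose bad := fun (j : 'I_n * 'I_4) (S : {set 'I_n}) => s < XX S j.
have hcov : forall S, ~~ E S -> exists j, bad j S.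
  move=> S nE; case: (boolP [exists j, bad j S]) => [/existsP //|/existsPn hall].
  case/negP: nE; rewrite /E MS_eq.
  have -> : 16 * sg * K = s + s by rewrite /s; ring.
  apply: specnorm_le; first by rewrite addr_ge0 // /s !mulr_ge0 // ltW.
  move=> x; apply: (hankel_bound omp h1 h2); first by rewrite addr_ge0 // /s !mulr_ge0 // ltW.
  move=> k; apply: good_dft => m.
  by have := hall (k, m); rewrite /bad -leNgt.
apply: le_trans (union_bound p01' hcov).
rewrite lerD2l lerN2.
have hj : forall j, bern_prob p (bad j) <= expR (- (4 * L)).
  move=> j; rewrite /bad /XX /eps.
  apply: le_trans (chernoff s p01 lam0 _) _.
    move=> t; apply: le_trans (_ : lam * (a * K) / p <= 1).
      rewrite ler_pM2r ?invr_gt0 // ler_wpM2l //.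
      apply: le_trans (bvec_le j t) _.
      by rewrite -sa gg_bound.
    have -> : lam * (a * K) / p = sg.
      have -> : lam * (a * K) / p = q / sg.
        rewrite /lam /q; field; rewrite !gt_eqF //.
      by rewrite -sg2 expr2 mulfK // gt_eqF.
    exact: sg1.
  rewrite ler_expR.
  have hs : \sum_t bvec j t ^+ 2 <= 2 * (a * K ^+ 2).
    by apply: le_trans (bvec_sum j) _; rewrite -sa gg_sum.
  apply: le_trans (_ : 2 * lam ^+ 2 / p * (2 * (a * K ^+ 2)) - lam * s <= _).
    rewrite lerD2r; apply: ler_wpM2l => //; apply: mulr_ge0.
      by apply: mulr_ge0 => //; exact: sqr_ge0.
    by rewrite invr_ge0 ltW.
  have e1 : lam * s = 8 * L.
    rewrite /lam /s; field; apply/andP; split; rewrite gt_eqF //.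
  have e2 : 2 * lam ^+ 2 / p * (2 * (a * K ^+ 2)) = 4 * (lam ^+ 2 * K ^+ 2) * (a / p) by ring.
  have e3 : lam ^+ 2 * K ^+ 2 = L ^+ 2 / q.
    rewrite /lam -sg2; field; apply/andP; split; rewrite gt_eqF //.
  rewrite e1 e2 e3 /q.
  have -> : 4 * (L ^+ 2 / (a * L / p)) * (a / p) = 4 * L.
    field; rewrite !gt_eqF //.
  lra.
apply: le_trans (_ : \sum_(j : 'I_n * 'I_4) expR (- (4 * L)) <= _); first by apply: ler_sum.
rewrite sumr_const card_prod !card_ord.
have eL : expR (- (4 * L)) = (n%:R ^+ 4)^-1.
  by rewrite expRN -[4]/(4%:R) expRM_natl /L lnK // posrE ltr0n.
rewrite eL -(mulr_natl ((n%:R ^+ 4)^-1) (n * 4)) natrM.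
have n2R : (2 : R) <= n%:R by rewrite ler_nat.
have n0R : (0 : R) < n%:R by lra.
rewrite -(ler_pM2r (_ : 0 < n%:R ^+ 4)); last by rewrite exprn_gt0.
have -> : n%:R * 4%:R * (n%:R ^+ 4)^-1 * n%:R ^+ 4 = 4 * (n%:R : R).
  by field; rewrite ?expf_neq0 ?(gt_eqF n0R).
have -> : 2 / n%:R ^+ 2 * n%:R ^+ 4 = 2 * (n%:R : R) ^+ 2.
  by field; rewrite ?expf_neq0 ?(gt_eqF n0R).
nra.
Qed.

End M2.
Section M3.
Variable R : realType.
Local Notation C := R[i].
Local Notation normc := ComplexField.Normc.normc.

Lemma zero_case n1 n2 r (p : R) (z : 'cV[C]_((n1 + n2).-1))
  (U : 'M[C]_(n1, r)) (sigma : 'rV[C]_r) (V : 'M[C]_(n2, r)) (a : R) :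
  (0 < n1)%N -> (0 < n2)%N ->
  adjmx U *m U = 1%:M -> adjmx V *m V = 1%:M ->
  Gop n1 n2 z = U *m diag_mx sigma *m adjmx V ->
  norm2inf U <= Num.sqrt a -> norm2inf V <= Num.sqrt a ->
  Num.sqrt a ^+ 2 * specnorm (Gop n1 n2 z) = 0 ->
  Gop n1 n2 z = 0 /\
  forall S, specnorm ((p^-1)%:C *: Gop n1 n2 (PiOmega S z) - Gop n1 n2 z) <= 0.
Proof.
move=> h1 h2 hU hV hA hUi hVi h0.
have hg : forall t, (t < (n1 + n2).-1)%N -> gg z t = 0.
  move=> t ht; apply: ComplexField.Normc.eq0_normc; apply/eqP; rewrite eq_le normc_ge0 andbT.
  by rewrite -h0 (gg_bound h1 h2 hU hV hA hUi hVi ht).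
split.
  by apply/matrixP => i j; rewrite A_entry mxE hg // ij_lt.
move=> S; rewrite MS_eq.
have -> : \matrix_(i < n1, j < n2) ww p z S (i + j) = 0.
  apply/matrixP => i j; rewrite !mxE.
  have := ww_ord p z S (Ordinal (ij_lt i j)); rewrite /= => ->.
  by rewrite hg ?mulr0 // ij_lt.
by apply: specnorm_le => // x; rewrite mul0mx vnorm0 mul0r.
Qed.

End M3.

Local Close Scope complex_scope.

Theorem lemma1 (R : realType) :
  exists c0 : R, 0 < c0 /\
  forall (n1 n2 r : nat) (mu p : R)
    (z : 'cV[R[i]]_((n1 + n2).-1))
    (U : 'M[R[i]]_(n1, r)) (sigma : 'rV[R[i]]_r) (V : 'M[R[i]]_(n2, r)),
    (0 < n1)%N -> (0 < n2)%N ->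
    let n := (n1 + n2).-1 in
    let cs := Num.max (n%:R / n1%:R) (n%:R / n2%:R) : R in
    \rank (Gop n1 n2 z) = r ->
    adjmx U *m U = 1%:M ->
    adjmx V *m V = 1%:M ->
    (forall k : 'I_r, 0 < sigma ord0 k) ->
    Gop n1 n2 z = U *m diag_mx sigma *m adjmx V ->
    norm2inf U <= Num.sqrt (mu * cs * r%:R / n%:R) ->
    norm2inf V <= Num.sqrt (mu * cs * r%:R / n%:R) ->
    0 < p <= 1 ->
    mu * cs * r%:R * ln (n%:R) / n%:R <= p ->
    bern_prob p (fun S : {set 'I_n} =>
      specnorm ((real_complex R p^-1) *: Gop n1 n2 (PiOmega S z) - Gop n1 n2 z)
        <= c0 * Num.sqrt (p^-1 * mu * cs * r%:R * ln (n%:R) / n%:R)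
              * specnorm (Gop n1 n2 z))
    >= 1 - 2 / n%:R ^+ 2.
Proof.
exists 16; split; first by rewrite ltr0n.
move=> n1 n2 r mu p z U sigma V h1 h2 n cs hrank hU hV hsig hA hUi hVi hp hpl.
set a := mu * cs * r%:R / n%:R in hUi hVi.
have p0 : 0 < p by case/andP: hp.
have p01' : 0 <= p <= 1 by case/andP: hp => b1 b2; rewrite b2 ltW.
have bp0 : forall E : pred {set 'I_n}, 0 <= bern_prob p E.
  by move=> E; apply: sumr_ge0 => S _; exact: (wt_ge0 S p01').
have n0 : (0 < n)%N by rewrite /n; lia.
have [n1eq|n1gt] : n = 1%N \/ (1 < n)%N by rewrite /n; lia.
  have hn : (n%:R : R) = 1 by rewrite n1eq.
  apply: le_trans (bp0 _); rewrite hn expr1n divr1; lra.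
have : 0 <= specnorm (Gop n1 n2 z) := specnorm_ge0 _.
rewrite le_eqVlt => /orP [/eqP K0|Kp].
  have h0 : Num.sqrt a ^+ 2 * specnorm (Gop n1 n2 z) = 0 by rewrite -K0 mulr0.
  have [_ hS] := zero_case p h1 h2 hU hV hA hUi hVi h0.
  rewrite /bern_prob (eq_bigl xpredT); last first.
    by move=> S; rewrite /= -K0 mulr0 (hS S).
  have := wt_total n p; rewrite /wt => ->.
  rewrite lerBlDr lerDl; apply: divr_ge0 => //; exact: sqr_ge0.
have a0 : 0 < a.
  rewrite ltNge; apply/negP => ha.
  have hs : Num.sqrt a = 0 by rewrite ler0_sqrtr.
  have h0 : Num.sqrt a ^+ 2 * specnorm (Gop n1 n2 z) = 0 by rewrite hs expr0n mul0r.
  have [hA0 _] := zero_case p h1 h2 hU hV hA hUi hVi h0.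
  move: Kp; rewrite hA0 lt_def => /andP [/eqP []].
  by apply/eqP; rewrite eq_le specnorm_ge0 andbT; apply: specnorm_le => // x; rewrite mul0mx vnorm0 mul0r.
have q1 : a * ln (n%:R : R) / p <= 1.
  rewrite ler_pdivrMr // mul1r.
  have -> : a * ln (n%:R : R) = mu * cs * r%:R * ln (n%:R) / n%:R by rewrite /a; ring.
  exact: hpl.
have [om omp] := prim_root_C R n0.
have -> : p^-1 * mu * cs * r%:R * ln (n%:R) / n%:R = a * ln (n%:R : R) / p by rewrite /a; ring.
exact: (core h1 h2 hU hV hA hUi hVi omp n0 n1gt hp Kp a0 q1).
Qed.
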